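(* Let $\mathfrak{h}$ be a Lie subalgebra of finite codimension in $\mathfrak{sl}_2(\mathbb{K}[\lambda])\cong\mathfrak{sl}_2(\mathbb{K})\otimes_{\mathbb{K}}\mathbb{K}[\lambda]$. Then every solvable ideal of $\mathfrak{h}$ is zero.
   Context: $\mathbb{K}$ is $\mathbb{C}$ or $\mathbb{R}$; $\mathbb{K}[\lambda]$ is the polynomial algebra in $\lambda$, and $\mathfrak{sl}_2(\mathbb{K}[\lambda])$ has bracket $[y_1\otimes f_1,y_2\otimes f_2]=[y_1,y_2]\otimes f_1f_2$. *)

(* Defs.v *)
(* K is R (an abstract realType) or its complexification R[i]. *)
From mathcomp Require Import all_boot all_algebra.
From mathcomp Require Export reals complex.
Set Implicit Arguments. Unset Strict Implicit. Unset Printing Implicit Defensive.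
Import GRing.Theory.
Local Open Scope ring_scope.

Section SL2Poly.
Variable K : fieldType.

(* It is a Lie algebra over K with bracket
   [x, y] = xy - yx (this agrees with [y1 (x) f1, y2 (x) f2] = [y1,y2] (x) f1 f2). *)
Definition mat := 'M[{poly K}]_2.

Definition in_sl2 (x : mat) : Prop := \tr x = 0.

Definition lie (x y : mat) : mat := x *m y - y *m x.

Definition kscale (c : K) (x : mat) : mat := c%:P *: x.

Definition is_subspace (S : mat -> Prop) : Prop :=
  [/\ (forall x, S x -> in_sl2 x), S 0,
      (forall x y, S x -> S y -> S (x + y)) &
      (forall (c : K) x, S x -> S (kscale c x))].

Definition lie_subalgebra (h : mat -> Prop) : Prop :=
  is_subspace h /\ (forall x y, h x -> h y -> h (lie x y)).

Definition finite_codim (h : mat -> Prop) : Prop :=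
  exists (n : nat) (v : 'I_n -> mat),
    (forall i, in_sl2 (v i)) /\
    (forall x, in_sl2 x -> exists c : 'I_n -> K,
         h (x - \sum_(i < n) kscale (c i) (v i))).

Definition lie_ideal (I h : mat -> Prop) : Prop :=
  [/\ is_subspace I, (forall x, I x -> h x) &
      (forall x y, h x -> I y -> I (lie x y))].

Definition bracket_span (A B : mat -> Prop) : mat -> Prop :=
  fun z => exists (n : nat) (c : 'I_n -> K) (a b : 'I_n -> mat),
    (forall i, A (a i) /\ B (b i)) /\
    z = \sum_(i < n) kscale (c i) (lie (a i) (b i)).

Definition derived (I : mat -> Prop) (k : nat) : mat -> Prop :=
  iter k (fun A => bracket_span A A) I.

Definition lie_solvable (I : mat -> Prop) : Prop :=
  exists k, forall x, derived I k x -> x = 0.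

Definition solvable_ideals_trivial : Prop :=
  forall h I : mat -> Prop,
    lie_subalgebra h -> finite_codim h ->
    lie_ideal I h -> lie_solvable I ->
    forall x, I x -> x = 0.

End SL2Poly.

(* Main.v *)
Require Import Defs.
From mathcomp Require Import all_boot all_algebra.
From mathcomp Require Import reals complex.
From mathcomp Require Import ring.
Set Implicit Arguments. Unset Strict Implicit. Unset Printing Implicit Defensive.
Import GRing.Theory Num.Theory.
Local Open Scope ring_scope.

Section Aux.
Variable K : fieldType.
Implicit Types x y z a b : mat K.

Lemma lieDr z x y : lie z (x + y) = lie z x + lie z y.
Proof. by rewrite /lie mulmxDl mulmxDr opprD addrACA. Qed.
Lemma lieDl z x y : lie (x + y) z = lie x z + lie y z.
Proof. by rewrite /lie mulmxDl mulmxDr opprD addrACA. Qed.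
Lemma lie0r z : lie z 0 = 0.
Proof. by rewrite /lie mulmx0 mul0mx subrr. Qed.
Lemma lieZr z (p : {poly K}) x : lie z (p *: x) = p *: lie z x.
Proof. by rewrite /lie scalerBr -scalemxAl -scalemxAr. Qed.
Lemma lieZl z (p : {poly K}) x : lie (p *: x) z = p *: lie x z.
Proof. by rewrite /lie scalerBr -scalemxAl -scalemxAr. Qed.

Lemma lie_sumr z n (F : 'I_n -> mat K) : lie z (\sum_(i < n) F i) = \sum_(i < n) lie z (F i).
Proof. exact: (big_morph (lie z) (lieDr z) (lie0r z)). Qed.

Lemma jacobi z a b : lie z (lie a b) = lie (lie z a) b + lie a (lie z b).
Proof.
rewrite /lie !mulmxBl !mulmxBr !mulmxA.
set A := z *m a *m b; set B := z *m b *m a; set C := a *m b *m z; set D := b *m a *m z.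
set E := a *m z *m b; set F := b *m z *m a.
rewrite !opprB !addrA.
rewrite (addrAC (A - E + D)) (addrAC (A - E)) subrK.
rewrite (addrAC (A + D - F)) subrK.
by rewrite (addrAC (A + D)) (addrAC A).
Qed.

Lemma trace_lie a b : \tr (lie a b) = 0.
Proof. by rewrite /lie linearB /= mxtrace_mulC subrr. Qed.


Lemma kscale1 x : kscale 1 x = x.
Proof. by rewrite /kscale scale1r. Qed.

Lemma subspace_sum (S : mat K -> Prop) n (c : 'I_n -> K) (w : 'I_n -> mat K) :
  S 0 -> (forall x y, S x -> S y -> S (x + y)) -> (forall c x, S x -> S (kscale c x)) ->
  (forall i, S (w i)) -> S (\sum_(i < n) kscale (c i) (w i)).
Proof. by move=> S0 SD SZ Sw; apply: big_ind => // i _; apply: SZ. Qed.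

Section BS.
Variables A B : mat K -> Prop.
Lemma bs0 : bracket_span A B 0.
Proof. by exists 0%N, (fun _ => 0), (fun _ => 0), (fun _ => 0); split=> [[]//|]; rewrite big_ord0. Qed.
Lemma bs_gen a b : A a -> B b -> bracket_span A B (lie a b).
Proof.
move=> Aa Bb; exists 1%N, (fun _ => 1), (fun _ => a), (fun _ => b); split=> //.
by rewrite big_ord1 kscale1.
Qed.
Lemma bsD x y : bracket_span A B x -> bracket_span A B y -> bracket_span A B (x + y).
Proof.
move=> [n1 [c1 [a1 [b1 [H1 ->]]]]] [n2 [c2 [a2 [b2 [H2 ->]]]]].
pose f T (g1 : 'I_n1 -> T) (g2 : 'I_n2 -> T) (i : 'I_(n1 + n2)) :=
  match split i with inl j => g1 j | inr j => g2 j end.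
exists (n1 + n2)%N, (f _ c1 c2), (f _ a1 a2), (f _ b1 b2); split.
  by move=> i; rewrite /f; case: (split i).
rewrite big_split_ord /=; congr (_ + _); apply: eq_bigr => i _; rewrite /f.
  by have -> : split (lshift n2 i) = inl i := unsplitK (inl _ i).
by have -> : split (rshift n1 i) = inr i := unsplitK (inr _ i).
Qed.
Lemma bsZ c x : bracket_span A B x -> bracket_span A B (kscale c x).
Proof.
move=> [n [c1 [a1 [b1 [H1 ->]]]]]; exists n, (fun i => c * c1 i), a1, b1; split=> //.
rewrite /kscale scaler_sumr; apply: eq_bigr => i _.
by rewrite scalerA polyCM.
Qed.
End BS.

Lemma derivedS (I : mat K -> Prop) m : derived I m.+1 = bracket_span (derived I m) (derived I m).
Proof. by []. Qed.

Lemma derived_stable (h I : mat K -> Prop) :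
  (forall z y, h z -> I y -> I (lie z y)) ->
  forall m z y, h z -> derived I m y -> derived I m (lie z y).
Proof.
move=> HI; elim=> [|m IH] z y hz; first exact: HI.
rewrite derivedS => -[n [c [a [b [Hab ->]]]]].
rewrite lie_sumr.
have -> : \sum_(i < n) lie z (kscale (c i) (lie (a i) (b i))) =
  \sum_(i < n) kscale (c i) (lie z (lie (a i) (b i))).
  by apply: eq_bigr => i _; rewrite /kscale lieZr.
apply: subspace_sum; [exact: bs0 | exact: bsD | exact: bsZ |] => i.
have [Ha Hb] := Hab i.
rewrite jacobi; apply: bsD; apply: bs_gen => //; exact: IH.
Qed.

Lemma derived_sl2 (I : mat K -> Prop) :
  (forall x, I x -> in_sl2 x) -> forall m x, derived I m x -> in_sl2 x.
Proof.
move=> HI [|m] x; first exact: HI.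
rewrite derivedS => -[n [c [a [b [Hab ->]]]]].
rewrite /in_sl2; apply: (big_ind (fun x : mat K => \tr x = 0)).
- by rewrite mxtrace0.
- by move=> u v; rewrite mxtraceD => -> ->; rewrite addr0.
by move=> i _; rewrite /kscale mxtraceZ trace_lie mulr0.
Qed.


Lemma fc_mult (h : mat K -> Prop) x : is_subspace h -> finite_codim h -> in_sl2 x ->
  exists2 p : {poly K}, p != 0 & h (p *: x).
Proof.
move=> [_ h0 hD hZ] [n [v [Hv Hc]]] Hx.
have Hx' : forall j : 'I_n.+1, in_sl2 ('X^j *: x).
  by move=> j; rewrite /in_sl2 mxtraceZ Hx mulr0.
have [C HC] := fin_all_exists (fun j => Hc _ (Hx' j)).
pose M : 'M[K]_(n.+1, n) := \matrix_(j, i) C j i.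
have kM : kermx M != 0.
  by rewrite kermx_eq0 -row_leq_rank -ltnNge ltnS rank_leq_col.
have [r Hr] : exists r, row r (kermx M) != 0.
  case: (pickP (fun r => row r (kermx M) != 0)) => [r Hr|H]; first by exists r.
  case/eqP: kM; apply/row_matrixP => r; rewrite row0; apply/eqP.
  by move: (H r) => /= /negbFE.
set d := row r (kermx M) in Hr.
have dM : d *m M = 0 by rewrite -row_mul mulmx_ker row0.
have [j0 Hj0] : exists j0, d 0 j0 != 0.
  case: (pickP (fun j => d 0 j != 0)) => [j Hj|H]; first by exists j.
  case/eqP: Hr; apply/rowP => j; rewrite [RHS]mxE; apply/eqP.
  by move: (H j) => /= /negbFE.
exists (\poly_(j < n.+1) d 0 (inord j)).
  apply/eqP => p0; have := congr1 (fun q : {poly K} => q`_j0) p0.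
  by rewrite coef_poly ltn_ord coef0 inord_val => /eqP; rewrite (negbTE Hj0).
have := @subspace_sum h n.+1 (fun j : 'I_n.+1 => d 0 j) _ h0 hD hZ HC.
congr h; rewrite /kscale.
under eq_bigr => j _ do rewrite scalerBr scaler_sumr.
rewrite sumrB.
rewrite [X in _ - X]exchange_big /= [X in _ - X]big1 ?subr0.
  rewrite poly_def scaler_suml; apply: eq_bigr => j _.
  by rewrite scalerA mul_polyC inord_val.
move=> i _.
under eq_bigr => j _ do rewrite scalerA -polyCM.
rewrite -scaler_suml -rmorph_sum.
have s0 : \sum_j d 0 j * C j i = 0.
  move: dM => /matrixP /(_ 0 i); rewrite !mxE => e.
  rewrite -[RHS]e; apply: eq_bigr => j _; by rewrite !mxE.
by rewrite s0 rmorph0 scale0r.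
Qed.

End Aux.
Lemma mul22 (R : comNzRingType) (A B : 'M[R]_2) i j : (A *m B) i j = A i 0 * B 0 j + A i 1 * B 1 j.
Proof.
rewrite mxE big_ord_recl big_ord1.
have -> : lift ord0 ord0 = 1 :> 'I_2 by apply/val_inj.
by have -> : ord0 = 0 :> 'I_2 by apply/val_inj.
Qed.
Lemma sub22 (R : comNzRingType) (A B : 'M[R]_2) i j : (A - B) i j = A i j - B i j.
Proof. by rewrite !mxE. Qed.
Lemma tr22 (R : comNzRingType) (A : 'M[R]_2) : \tr A = A 0 0 + A 1 1.
Proof.
rewrite /mxtrace big_ord_recl big_ord1.
have -> : lift ord0 ord0 = 1 :> 'I_2 by apply/val_inj.
by have -> : ord0 = 0 :> 'I_2 by apply/val_inj.
Qed.
Lemma delta22 (R : comNzRingType) (i j k l : 'I_2) : (delta_mx i j : 'M[R]_2) k l = ((k == i) && (l == j))%:R.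
Proof. by rewrite mxE. Qed.

Lemma key (K : numFieldType) (y : mat K) : in_sl2 y ->
  lie y (lie (delta_mx 0 1) y) = 0 -> lie y (lie (delta_mx 1 0) y) = 0 -> y = 0.
Proof.
rewrite /in_sl2 /lie tr22 => tr0 E1 E2.
have e1 := congr1 (fun M : mat K => M 1 0) E1.
have e2 := congr1 (fun M : mat K => M 0 1) E1.
have e3 := congr1 (fun M : mat K => M 0 1) E2.
move: e1 e2 e3; rewrite !(mul22, sub22, delta22) /=.
rewrite !mxE.
set a := y 0 0; set b := y 0 1; set c := y 1 0; set d := y 1 1.
have hd : d = - a by apply: (addrI a); rewrite tr0 subrr.
have two : (2%:R : {poly K}) != 0 by rewrite -polyC_natr polyC_eq0 pnatr_eq0.
move=> e1 e2 e3.
have hc : c = 0.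
  have : 2%:R * (c * c) = 0 by rewrite -e1; ring.
  by move/eqP; rewrite mulf_eq0 (negbTE two) /= mulf_eq0 orbb => /eqP.
have hb : b = 0.
  have : 2%:R * (b * b) = 0 by rewrite -e3; ring.
  by move/eqP; rewrite mulf_eq0 (negbTE two) /= mulf_eq0 orbb => /eqP.
have ha : a = 0.
  have : 2%:R * 2%:R * (a * a) = 0 by rewrite -oppr0 -e2 hd hb hc; ring.
  by move/eqP; rewrite !mulf_eq0 (negbTE two) /= orbb => /eqP.
have i2 : forall i : 'I_2, i = 0 \/ i = 1.
  by case=> [[|[|k]] Hk]; [left; apply: val_inj | right; apply: val_inj | ].
apply/matrixP => i j; rewrite mxE.
by case: (i2 i) => ->; case: (i2 j) => ->; rewrite -/a -/b -/c -/d ?hd ?ha ?hb ?hc ?oppr0.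
Qed.

Lemma main (K : numFieldType) : solvable_ideals_trivial K.
Proof.
move=> h I Hh Hfc [[Isl _ _ _] Ih HI] [k Hk].
have Hsub := Hh.1.
have E12 : in_sl2 (delta_mx 0 1 : mat K) by rewrite /in_sl2 tr22 !delta22 /= addr0.
have E21 : in_sl2 (delta_mx 1 0 : mat K) by rewrite /in_sl2 tr22 !delta22 /= addr0.
have [p p0 hp] := fc_mult Hsub Hfc E12.
have [q q0 hq] := fc_mult Hsub Hfc E21.
have step : forall m, (forall x, derived I m.+1 x -> x = 0) ->
    forall y, derived I m y -> y = 0.
  move=> m Hm y Hy; apply: key.
  - exact: (derived_sl2 Isl Hy).
  - have := Hm _ (bs_gen Hy (derived_stable HI hp Hy)).
    by rewrite lieZl lieZr => /eqP; rewrite scalemx_eq0 (negbTE p0) /= => /eqP.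
  - have := Hm _ (bs_gen Hy (derived_stable HI hq Hy)).
    by rewrite lieZl lieZr => /eqP; rewrite scalemx_eq0 (negbTE q0) /= => /eqP.
elim: k Hk => [|k IH] Hk; first exact: Hk.
by apply: IH; apply: step.
Qed.

Theorem lemma6p2 (R : realType) :
  solvable_ideals_trivial R /\ solvable_ideals_trivial R[i].
Proof. by split; apply: main. Qed.
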